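(* Let $n\ge1$, $\varepsilon\in D$, $s\in D^n$, and let $\rho^{(j)},\ell_j,\Delta_j,e_j,j',p(j)$ be defined by the recursion below. Then for every $0\le j\le n$: $\rho^{(j)}_0\neq0$, $\deg\rho^{(j)}\le\ell_j$, $(\rho^{(j)},\ell_j)\in\mathrm{Rp}(s^{(j)})$, and $x^{\ell_j-\deg\rho^{(j)}}\big(\rho^{(j)}\big)^{*}\in\mathrm{Min}(s^{(j)})$; in particular $\ell_j=L(s^{(j)})$. Moreover, for $j\ge1$: if $\Delta_j=0$ then $\ell_j=\ell_{j-1}$ and $e_j=e_{j-1}+1$; if $\Delta_j\neq0$ then $\ell_j=\max\{e_{j-1},0\}+\ell_{j-1}=j'+1-\ell_{j'}$ and $e_j=-|e_{j-1}|+1$.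
   Context: Let $D$ be a commutative integral domain with $1\neq 0$. For nonzero $f\in D[x]$, $f^{*}(x)=x^{\deg f}f(x^{-1})$. For $s=(s_1,\dots,s_n)\in D^n$ let $s^{(i)}=(s_1,\dots,s_i)$, $\overline{s}=s_1x+\cdots+s_nx^n$, $\underline{s}=s_1x^{-1}+\cdots+s_nx^{-n}\in D[x,x^{-1}]$, and $F_k$ the coefficient of $x^k$ in a Laurent polynomial $F$. A polynomial $f$ is an annihilator of $s$ if $f=0$ or $d=\deg f\ge0$ and $(f\cdot\underline{s})_{d-j}=0$ for $d+1\le j\le n$; $\mathrm{Min}(s)$ is the set of nonzero annihilators of least degree and $L(s)$ that degree. A reciprocal pair for $s$ is $(g,\ell)$ with $g\in D[x]$, $0\le\ell\le n$, $g_0\neq0$, $\deg g\le\ell$, and $\sum_{k=0}^{\deg g}g_ks_{j-k}=0$ for $\ell+1\le j\le n$; $\mathrm{Rp}(s)$ is the set of these. Recursion (relative to fixed $\varepsilon\in D$): $\rho^{(-1)}=\varepsilon$, $\rho^{(0)}=1$, $\ell_{-1}=\ell_0=0$, $\Delta_0=1$, $0'=-1$, $p(0)=1$, and $e_j=j+1-2\ell_j$ for $j\ge0$. For $j=1,\dots,n$ successively: $\Delta_j=(\rho^{(j-1)}\cdot\overline{s})_j=\sum_{k=0}^{\deg\rho^{(j-1)}}\rho^{(j-1)}_ks_{j-k}$; $j'=(j-1)'$ if $\Delta_j=0$ or $e_{j-1}\le0$, and $j'=j-1$ if $\Delta_j\neq0$ and $e_{j-1}>0$; $p(j)=j-j'$;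 $\Delta'_j=\Delta_{(j-1)'+1}$; $\ell_j=\ell_{j-1}$ if $\Delta_j=0$ or $e_{j-1}\le0$, and $\ell_j=j-\ell_{j-1}$ otherwise; $\rho^{(j)}=\rho^{(j-1)}$ if $\Delta_j=0$, and otherwise $\rho^{(j)}=\Delta'_j\,\rho^{(j-1)}-\Delta_j\,x^{p(j-1)}\rho^{((j-1)')}$. *)

(* Defs.v *)
From HB Require Import structures.
From mathcomp Require Import all_boot all_order all_algebra.
From Stdlib Require Import ClassicalEpsilon.
Set Implicit Arguments. Unset Strict Implicit. Unset Printing Implicit Defensive.
Import Order.TTheory GRing.Theory Num.Theory.
Local Open Scope ring_scope.

Section BMDefs.
Variable D : idomainType.

(* s_i for a sequence s = (s_1,...,s_n) stored as a seq with s_i = s`_(i-1);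
   out-of-range index 0 gives 0 (never used in a meaningful way). *)
Definition sidx (s : seq D) (i : nat) : D := if i is i'.+1 then s`_i' else 0.

Definition deg (f : {poly D}) : nat := (size f).-1.

(* reciprocal f^* = x^{deg f} f(x^{-1}) *)
Definition recip (f : {poly D}) : {poly D} := Poly (rev f).

(* f is an annihilator of s: f = 0, or (f * underline s)_{d-j} = 0 for d+1 <= j <= n;
   the coefficient of x^{d-j} in f * underline s is sum_k f_k s_{j-d+k}. *)
Definition annihilator (s : seq D) (f : {poly D}) : Prop :=
  f = 0 \/ forall j : nat, (deg f < j <= size s)%N ->
     \sum_(k < size f) f`_k * sidx s (j - deg f + k) = 0.

Definition isMin (s : seq D) (f : {poly D}) : Prop :=
  [/\ f != 0, annihilator s f &
      forall g : {poly D}, g != 0 -> annihilator s g -> (deg f <= deg g)%N].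

Definition Lpred (s : seq D) : pred nat := fun d =>
  if excluded_middle_informative
       (exists f : {poly D}, [/\ f != 0, annihilator s f & deg f = d])
  then true else false.

Lemma Lpred_ex (s : seq D) : exists d, Lpred s d.
Proof.
exists (size s); rewrite /Lpred; case: excluded_middle_informative => // [[]].
exists 'X^(size s); split.
- by rewrite monic_neq0 // monicXn.
- right=> j /andP[lt le]; exfalso.
  by move: lt; rewrite /deg size_polyXn /= ltnNge le.
- by rewrite /deg size_polyXn.
Qed.

Definition L (s : seq D) : nat := ex_minn (Lpred_ex s).

Definition Rp (s : seq D) (g : {poly D}) (l : nat) : Prop :=
  [/\ (l <= size s)%N, g`_0 != 0, (deg g <= l)%N &
      forall j : nat, (l < j <= size s)%N ->
        \sum_(k < size g) g`_k * sidx s (j - k) = 0].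

Record entry := Entry { e_rho : {poly D}; e_ell : nat; e_jp : int; e_delta : D }.
(* entry for index j stores rho^(j), ell_j, j', Delta_j *)

Variables (eps : D) (s : seq D).

Definition dflt : entry := Entry 0 0 0 0.

(* rho^(k) for k >= -1, read from history h = entries for indices 0..j-1 *)
Definition at_rho (h : seq entry) (k : int) : {poly D} :=
  match k with Posz m => e_rho (nth dflt h m) | Negz _ => eps%:P end.

(* step j (j >= 1), given history h of entries 0..j-1 *)
Definition step (h : seq entry) (j : nat) : entry :=
  let pr := nth dflt h j.-1 in
  let rho1 := e_rho pr in
  let l1 := e_ell pr in
  let jp1 := e_jp pr in
  let del := \sum_(k < size rho1) rho1`_k * sidx s (j - k) in
  let e1 : int := (j%:Z - 1) + 1 - 2 * l1%:Z in
  let jump := (del != 0) && (0 < e1) in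
  let jp : int := if jump then j%:Z - 1 else jp1 in
  let p1 : int := (j%:Z - 1) - jp1 in
  let del' := e_delta (nth dflt h (absz (jp1 + 1))) in
  let l := if jump then (j - l1)%N else l1 in
  let rho := if del == 0 then rho1
             else del' *: rho1 - del *: ('X^(absz p1) * at_rho h jp1) in
  Entry rho l jp del.

Fixpoint hist (j : nat) : seq entry :=
  if j is j'.+1 then let h := hist j' in rcons h (step h j'.+1)
  else [:: Entry 1 0 (-1) 1].

Definition entry_at (j : nat) : entry := nth dflt (hist j) j.

Definition rho (j : nat) : {poly D} := e_rho (entry_at j).
Definition ell (j : nat) : nat := e_ell (entry_at j).
Definition jp (j : nat) : int := e_jp (entry_at j).
Definition delta (j : nat) : D := e_delta (entry_at j).
Definition e (j : nat) : int := j%:Z + 1 - 2 * (ell j)%:Z.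
Definition p (j : nat) : int := j%:Z - jp j.
(* ell_k for an index k >= -1 (ell_{-1} = 0) *)
Definition ellZ (k : int) : nat := match k with Posz m => ell m | Negz _ => 0%N end.

End BMDefs.

(* Main.v *)
Require Import Defs.
From HB Require Import structures.
From mathcomp Require Import all_boot all_order all_algebra.
From Stdlib Require Import Lia ClassicalEpsilon.
Import Order.TTheory GRing.Theory Num.Theory.
Local Open Scope ring_scope.
Set Implicit Arguments. Unset Strict Implicit. Unset Printing Implicit Defensive.

Ltac tonat := repeat match goal with
  | H : is_true (_ <= _)%N |- _ => move/ssrnat.leP: H => H
  | H : is_true (_ < _)%N |- _ => move/ssrnat.ltP: H => H
  | H : is_true (_ == _)%N |- _ => move/eqP: H => H
  | H : is_true (_ && _) |- _ => let H1 := fresh "H" in let H2 := fresh "H" in case/andP: H => H1 H2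
  end.
Ltac nlia := intros; tonat; (try (apply/andP; split)); (try apply/ssrnat.leP); unfold addn, subn, muln, addn_rec, subn_rec, muln_rec, double, double_rec in *; lia.

Section Proofs.
Variables (D : idomainType) (eps : D) (s : seq D).

Notation hist := (hist eps s).
Notation entry_at := (entry_at eps s).
Notation rho := (rho eps s).
Notation ell := (ell eps s).
Notation jp := (jp eps s).
Notation delta := (delta eps s).
Notation e := (e eps s).

Lemma size_hist j : size (hist j) = j.+1.
Proof. by elim: j => //= j IH; rewrite size_rcons IH. Qed.

Lemma nth_hist j k : (k <= j)%N -> nth (dflt D) (hist j) k = entry_at k.
Proof.
elim: j k => [|j IH] k.
  by rewrite leqn0 => /eqP ->.
rewrite leq_eqVlt => /orP[/eqP -> //|lt]; rewrite /= nth_rcons size_hist lt IH //.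
Qed.

Lemma entry_S j : entry_at j.+1 = step eps s (hist j) j.+1.
Proof. by rewrite /Defs.entry_at /= nth_rcons size_hist ltnn eqxx. Qed.

Definition A (c : {poly D}) (i : nat) := \sum_(k < size c) c`_k * sidx s (i - k).

Definition rhoZ (k : int) : {poly D} := match k with Posz m => rho m | Negz _ => eps%:P end.

Definition jpI j := jp j = -1 \/ exists J, jp j = Posz J /\ (J < j)%N.

Definition jump j := (delta j.+1 != 0) && (0 < e j).

Lemma PS1 (j : nat) : (Posz j.+1 - 1 = Posz j)%R.
Proof. by rewrite -addn1 PoszD addrK. Qed.

Lemma delta_S j : delta j.+1 = A (rho j) j.+1.
Proof. by rewrite /Defs.delta entry_S. Qed.

Lemma jp_S j : jp j.+1 = if jump j then Posz j else jp j.
Proof. by rewrite /Defs.jp entry_S /= PS1 /jump delta_S. Qed.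

Lemma ell_S j : ell j.+1 = if jump j then (j.+1 - ell j)%N else ell j.
Proof. by rewrite /Defs.ell entry_S /= PS1 /jump delta_S. Qed.

Lemma rho_S j : jpI j -> rho j.+1 = if delta j.+1 == 0 then rho j else
   delta (absz (jp j + 1)) *: rho j - delta j.+1 *: ('X^(absz (Posz j - jp j)) * rhoZ (jp j)).
Proof.
move=> hj; rewrite {1}/Defs.rho entry_S /= PS1 delta_S /Defs.jp.
change (nth (dflt D) (hist j) j) with (entry_at j).
rewrite -/(rho j) /A.
rewrite -/(jp j). case: hj => [->|[J [-> lt]]] /=.
  by rewrite nth_hist.
have lt' : (J <= j)%N by apply: ltnW.
by rewrite (nth_hist lt') nth_hist ?addn1.
Qed.

Definition Asum (N : nat) (c : nat -> D) (i : nat) := \sum_(k < N) c k * sidx s (i - k).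

Lemma A_ext (c : {poly D}) N i : (size c <= N)%N -> A c i = Asum N (fun k => c`_k) i.
Proof.
move=> le; rewrite /A /Asum -(subnKC le) big_split_ord /=.
rewrite [X in _ + X]big1 ?addr0 // => k _.
by rewrite nth_default ?mul0r // leq_addr.
Qed.

Lemma Asum_lin (c1 c2 : nat -> D) a b N i :
  Asum N (fun k => a * c1 k - b * c2 k) i = a * Asum N c1 i - b * Asum N c2 i.
Proof.
rewrite /Asum mulr_sumr mulr_sumr -sumrB; apply: eq_bigr => k _.
by rewrite mulrBl !mulrA.
Qed.

Lemma A_lin (p q : {poly D}) a b i : A (a *: p - b *: q) i = a * A p i - b * A q i.
Proof.
have le : (size (a *: p - b *: q)%R <= size p + size q)%N.
  apply: leq_trans (size_polyD _ _) _; rewrite geq_max size_polyN.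
  apply/andP; split.
    by apply: leq_trans (size_scale_leq _ _) _; rewrite leq_addr.
  by apply: leq_trans (size_scale_leq _ _) _; rewrite leq_addl.
rewrite (A_ext i le) (A_ext i (leq_addr (size q) (size p))) (A_ext i (leq_addl (size p) (size q))) -Asum_lin.
by rewrite /Asum; apply: eq_bigr => k _; rewrite coefB !coefZ.
Qed.

Lemma A_shift m (q : {poly D}) i : A ('X^m * q) i = A q (i - m).
Proof.
have le : (size ('X^m * q)%R <= m + size q)%N.
  apply: leq_trans (size_polyMleq _ _) _; rewrite size_polyXn /=.
  by case: (size q) => [|k]; rewrite ?addn0 ?addnS.
rewrite (A_ext i le) (A_ext (i - m) (leqnn (size q))) /Asum big_split_ord /=.
rewrite big1 ?add0r => [|k _]; last by rewrite coefXnM ltn_ord mul0r.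
apply: eq_bigr => k _; rewrite coefXnM ltnNge leq_addr /= addKn.
by rewrite subnDA.
Qed.

Lemma A0 c : A c 0 = 0.
Proof. by rewrite /A big1 // => k _; rewrite sub0n mulr0. Qed.

Lemma massey (c c' : nat -> D) d d' j :
  (d + d' < j)%N ->
  (forall i, (d < i < j)%N -> Asum d.+1 c i = 0) ->
  Asum d.+1 c j != 0 ->
  (forall i, (d' < i <= j)%N -> Asum d'.+1 c' i = 0) ->
  c' 0%N != 0 -> False.
Proof.
move=> hdj hc hcj hc' hc'0.
pose S := \sum_(k < d'.+1) \sum_(m < d.+1) c' k * (c m * sidx s (j - k - m)).
have E1 : S = c' 0%N * Asum d.+1 c j.
  rewrite /S big_ord_recl /= subn0 /Asum mulr_sumr [X in _ + X]big1 ?addr0 // => k _.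
  rewrite -mulr_sumr /=.
  have -> : \sum_(i < d.+1) c i * sidx s (j - bump 0 k - i) = Asum d.+1 c (j - bump 0 k) by [].
  rewrite hc ?mulr0 //; move: (ltn_ord k); rewrite /bump add1n; nlia.
have E2 : S = 0.
  rewrite /S exchange_big /= big1 // => m _.
  have -> : \sum_(i < d'.+1) c' i * (c m * sidx s (j - i - m)) = c m * Asum d'.+1 c' (j - m).
    rewrite /Asum mulr_sumr; apply: eq_bigr => k _.
    by rewrite mulrCA subnAC.
  rewrite hc' ?mulr0 //; move: (ltn_ord m); nlia.
have : c' 0%N * Asum d.+1 c j = 0 by rewrite -E1 E2.
by move/eqP; rewrite mulf_eq0 (negbTE hc'0) (negbTE hcj).
Qed.

Definition Inv j :=
 [/\ jpI j,
     (jp j = -1 -> ell j = 0%N) /\ (forall J, jp j = Posz J -> (ell j + ell J)%N = J.+1),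
     (rho j)`_0 != 0 /\ (size (rho j) <= (ell j).+1)%N,
     (forall i, (ell j < i <= j)%N -> A (rho j) i = 0) &
     [/\ (ell j <= j)%N, delta (absz (jp j + 1)) != 0 &
       forall (c : nat -> D) d, c 0%N != 0 ->
         (forall i, (d < i <= j)%N -> Asum d.+1 c i = 0) -> (ell j <= d)%N]].

Lemma egt0 j : (0 < e j) = (2 * ell j <= j)%N.
Proof.
rewrite /Defs.e; have -> : 2 * Posz (ell j) = Posz (2 * ell j) by rewrite PoszM.
by rewrite -[_ + 1]/(Posz (j + 1)) subr_gt0 ltz_nat addn1 ltnS.
Qed.

Lemma Inv0 : Inv 0.
Proof.
have E : entry_at 0 = Entry 1 0 (-1) 1 by [].
rewrite /Inv /jpI /Defs.jp /Defs.ell /Defs.rho /Defs.delta E /=.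
split => //; first by left.
- by rewrite coef1 /= oner_neq0 size_poly1.
- by move=> i; rewrite ltnNge andbC; case: (i <= 0)%N.
- by split => //; rewrite oner_neq0.
Qed.

Lemma size_comb (a b : D) (p q : {poly D}) N :
  (size p <= N)%N -> (size q <= N)%N -> (size (a *: p - b *: q)%R <= N)%N.
Proof.
move=> hp hq; apply: leq_trans (size_polyD _ _) _; rewrite geq_max size_polyN.
by rewrite (leq_trans (size_scale_leq _ _) hp) (leq_trans (size_scale_leq _ _) hq).
Qed.

Lemma size_Xmul m (q : {poly D}) N : (m + size q <= N)%N -> (size ('X^m * q)%R <= N)%N.
Proof.
move=> h; apply: leq_trans (size_polyMleq _ _) _; rewrite size_polyXn /=.
apply: leq_trans h; case: (size q) => [|k]; rewrite ?addn0 ?addnS //.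
Qed.

Lemma Inv_S j : (forall k, (k <= j)%N -> Inv k) -> Inv j.+1.
Proof.
move=> IH; have [hjp [hl1 hl2] [h0 hsz] hA [hlj hd' hLB]] := IH j (leqnn j).
have hell := ell_S j; have hjpS := jp_S j; have hrho := rho_S hjp.
have hD := delta_S j.
have hjmp : jump j = (delta j.+1 != 0) && (2 * ell j <= j)%N by rewrite /jump egt0.
have LB : forall (c : nat -> D) d, c 0%N != 0 ->
    (forall i, (d < i <= j.+1)%N -> Asum d.+1 c i = 0) -> (ell j.+1 <= d)%N.
  move=> c d c0 hc.
  have hd : (ell j <= d)%N.
    apply: (hLB c d c0) => i /andP[a b]; apply: hc; rewrite a /=; exact: leqW.
  rewrite hell; case: ifP => // /andP[dn _].
  rewrite leqNgt; apply/negP => lt.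
  apply: (massey (c := fun k => (rho j)`_k) (c' := c) (d := ell j) (d' := d) (j := j.+1)) => //.
  - nlia.
  - move=> i /andP[a b]; rewrite -A_ext //; apply: hA; rewrite a; exact: b.
  - by rewrite -A_ext // -hD.
have comb : [/\ jpI j.+1,
     (jp j.+1 = -1 -> ell j.+1 = 0%N) /\
       (forall J, jp j.+1 = Posz J -> (ell j.+1 + ell J)%N = J.+1),
     (ell j.+1 <= j.+1)%N & delta (absz (jp j.+1 + 1)) != 0].
  rewrite /jpI hjpS hell; case hj: (jump j).
  - move: hj; rewrite hjmp => /andP[dn _].
    split.
    + by right; exists j.
    + split => // J [<-]; rewrite subnK //; exact: leqW.
    + exact: leq_subr.
    + by rewrite -[Posz j + 1]/(Posz (j + 1)) /= addn1.
  - split => //.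
    + case: hjp => [->|[J [-> lt]]]; first by left.
      by right; exists J; split => //; apply: ltnW.
    + exact: leqW.
have [cjp crel cl cd] := comb.
suff [H1 H2] : ((rho j.+1)`_0 != 0 /\ (size (rho j.+1) <= (ell j.+1).+1)%N) /\
   (forall i, (ell j.+1 < i <= j.+1)%N -> A (rho j.+1) i = 0) by split.
case: hjp hl1 hl2 hd' hrho => [hm|[J [hJ lt]]] hl1 hl2 hd' hrho.
-
  have l0 := hl1 hm.
  have E1 : absz (((-1)%R : int) + 1)%R = 0%N by [].
  have E2 : absz (Posz j - (-1))%R = j.+1 by rewrite opprK -[Posz j + 1]/(Posz (j+1)) /= addn1.
  rewrite hm E1 E2 in hd' hrho.
  case hDz: (delta j.+1 == 0) hrho => hrho.
    have nj : jump j = false by rewrite /jump hDz.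
    rewrite hrho hell nj; split; first by split.
    move=> i /andP[a b].
    case: (ltngtP i j.+1) b => // [ij|->] _; first by apply: hA; rewrite a.
    by rewrite -hD; apply/eqP.
  have yj : jump j by rewrite hjmp hDz l0.
  rewrite hell yj l0 subn0 in LB cl *.
  rewrite hrho; split.
  + split.
      rewrite coefB !coefZ coefXnM /= mulr0 subr0; exact: mulf_neq0.
    apply: size_comb; first by apply: leq_trans hsz _; rewrite l0.
    have -> : rhoZ (-1) = eps%:P by [].
    apply: size_Xmul; rewrite size_polyC; case: (eps != 0) => /=; [by rewrite addn1 | by rewrite addn0 leqnSn].
  + move=> i /andP[a b]; exfalso; nlia.
-
  have l2 := hl2 J hJ.
  rewrite hJ in hd' hrho.
  have [_ _ [_ hszJ] hAJ _] := IH J (ltnW lt).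
  have hDJ := delta_S J.
  have absJ : `|(Posz j - Posz J)%R|%N = (j - J)%N by rewrite subzn // ltnW.
  rewrite absJ in hrho.
  have absJ1 : `|(Posz J + 1)%R|%N = J.+1 by rewrite -[Posz J + 1]/(Posz (J + 1)) /= addn1.
  rewrite absJ1 in hd' hrho.
  have hrz : rhoZ (Posz J) = rho J by [].
  rewrite hrz in hrho.
  case hDz: (delta j.+1 == 0) hrho => hrho.
    have nj : jump j = false by rewrite /jump hDz.
    rewrite hrho hell nj; split; first by split.
    move=> i /andP[a b].
    case: (ltngtP i j.+1) b => // [ij|->] _; first by apply: hA; rewrite a.
    by rewrite -hD; apply/eqP.
  have hbounds : (ell j <= ell j.+1)%N && (j.+1 - ell j <= ell j.+1)%N.
    rewrite hell hjmp hDz /=; case: (leqP (2 * ell j) j) => h; nlia.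
  rewrite hrho; split.
  + split.
      rewrite coefB !coefZ coefXnM subn_gt0 lt mulr0 subr0; exact: mulf_neq0.
    apply: size_comb; first by apply: leq_trans hsz _; nlia.
    by apply: size_Xmul; nlia.
  + move=> i /andP[a b]; rewrite A_lin A_shift.
    case: (ltngtP i j.+1) b => // [ij|->] _.
      rewrite hA; last nlia.
      rewrite hAJ; last nlia.
      by rewrite !mulr0 subrr.
    have -> : (j.+1 - (j - J) = J.+1)%N by nlia.
    by rewrite -hD -hDJ mulrC subrr.
Qed.

Lemma Inv_all j : Inv j.
Proof.
suff H : forall k, (k <= j)%N -> Inv k by apply: H.
elim: j => [|j IH] k.
  by rewrite leqn0 => /eqP ->; exact: Inv0.
rewrite leq_eqVlt => /orP[/eqP ->|lt]; first exact: Inv_S.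
by apply: IH.
Qed.

Lemma sidx_take j i : (i <= j)%N -> sidx (take j s) i = sidx s i.
Proof. by case: i => //= i lt; rewrite nth_take. Qed.

Lemma eE k : e k = Posz k.+1 - Posz (2 * ell k).
Proof.
rewrite /Defs.e.
have -> : 2 * Posz (ell k) = Posz (2 * ell k) by rewrite PoszM.
by rewrite -[k.+1]addn1 PoszD.
Qed.


Lemma recip_poly (c : {poly D}) d : c`_0 != 0 -> (size c <= d.+1)%N ->
  ('X^(d - deg c) * recip c)%R = \poly_(k < d.+1) c`_(d - k).
Proof.
move=> c0 hsz.
have cnz : c != 0 by apply: contraNneq c0 => ->; rewrite coef0.
have cs : size c = (deg c).+1 by rewrite /deg prednK // size_poly_gt0.
apply/polyP => k; rewrite coef_poly coefXnM /recip coef_Poly.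
case: (ltnP k (d - deg c)) => h1.
  have h3 : (k < d.+1)%N by move: hsz; rewrite cs; nlia.
  rewrite h3 nth_default // cs; nlia.
case: (ltnP (k - (d - deg c)) (size c)) => h2.
  have h3 : (k < d.+1)%N by move: h2 hsz; rewrite cs; nlia.
  rewrite nth_rev // h3; congr (c`_ _); move: h2 hsz; rewrite cs; nlia.
have h3 : (k < d.+1)%N = false by apply/negbTE; rewrite -leqNgt; move: h2 hsz; rewrite cs; nlia.
by rewrite nth_default ?size_rev // h3.
Qed.


Lemma part1 j : (j <= size s)%N ->
  [/\ (rho j)`_0 != 0, (deg (rho j) <= ell j)%N, Rp (take j s) (rho j) (ell j),
      isMin (take j s) ('X^(ell j - deg (rho j)) * recip (rho j)) & ell j = L (take j s)].
Proof.
move=> hjn; have [_ _ [h0 hsz] hA [hlj _ hLB]] := Inv_all j.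
have hst : size (take j s) = j by rewrite size_takel.
have hdeg : (deg (rho j) <= ell j)%N by rewrite /deg -subn1 leq_subLR add1n.
pose F := \poly_(k < (ell j).+1) (rho j)`_(ell j - k).
have hF : ('X^(ell j - deg (rho j)) * recip (rho j))%R = F := recip_poly h0 hsz.
have hFs : size F = (ell j).+1 by rewrite size_poly_eq // subnn.
have hFd : deg F = ell j by rewrite /deg hFs.
have hFnz : F != 0 by rewrite -size_poly_eq0 hFs.
have annF : annihilator (take j s) F.
  right => i; rewrite hst hFd => /andP[a b].
  rewrite hFs -[RHS](hA i); last by rewrite a b.
  rewrite (A_ext i hsz) /Asum (reindex_inj rev_ord_inj) /=; apply: eq_bigr => k _.
  have hk := ltn_ord k.
  rewrite coef_poly /= subSS ltnS leq_subr subKn; last by rewrite -ltnS.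
  have -> : (i - ell j + (ell j - k) = i - k)%N by nlia.
  by rewrite sidx_take // (leq_trans (leq_subr _ _) b).
have minF : forall g : {poly D}, g != 0 -> annihilator (take j s) g -> (ell j <= deg g)%N.
  move=> g gnz [g0|hg]; first by rewrite g0 eqxx in gnz.
  have gs : size g = (deg g).+1 by rewrite /deg prednK // size_poly_gt0.
  apply: (hLB (fun m => g`_(deg g - m)) (deg g)).
    by rewrite subn0 /deg -lead_coefE lead_coef_eq0.
  move=> i /andP[a b]; rewrite -[RHS](hg i); last by rewrite hst a b.
  rewrite gs /Asum [RHS](reindex_inj rev_ord_inj); apply: eq_bigr => k _ /=.
  have hk := ltn_ord k.
  rewrite subSS.
  have -> : (i - deg g + (deg g - k) = i - k)%N by nlia.
  by rewrite sidx_take // (leq_trans (leq_subr _ _) b).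
split => //.
- split => //; first by rewrite hst.
  rewrite hst => i /andP[a b]; rewrite -[RHS](hA i); last by rewrite a b.
  by rewrite /A; apply: eq_bigr => k _; rewrite sidx_take // (leq_trans (leq_subr _ _) b).
- by rewrite /isMin hF; split => // g; rewrite hFd; exact: minF.
- rewrite /L; case: ex_minnP => m hm hmin.
  apply/eqP; rewrite eqn_leq; apply/andP; split.
    move: hm; rewrite /Lpred; case: excluded_middle_informative => // [[f [fnz fann fdeg]]] _.
    by rewrite -fdeg; exact: minF.
  apply: hmin; rewrite /Lpred; case: excluded_middle_informative => // [[]].
  by exists F; split.
Qed.


Lemma part2 k :
  (delta k.+1 = 0 -> ell k.+1 = ell k /\ e k.+1 = e k + 1) /\
  (delta k.+1 != 0 -> [/\ Posz (ell k.+1) = Num.max (e k) 0 + Posz (ell k),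
       Posz (ell k.+1) = jp k.+1 + 1 - Posz (ellZ eps s (jp k.+1)) & e k.+1 = - `|e k| + 1]).
Proof.
have hell := ell_S k.
have hjmp : jump k = (delta k.+1 != 0) && (2 * ell k <= k)%N by rewrite /jump egt0.
have [hjp [r1 r2] _ _ _] := Inv_all k.+1.
have [_ _ _ _ [hlk _ _]] := Inv_all k.
have eS : ell k.+1 = ell k -> e k.+1 = e k + 1.
  move=> El; rewrite !eE El.
  have -> : Posz k.+2 = Posz k.+1 + 1 by rewrite -[k.+2]addn1 PoszD.
  by rewrite addrAC.
split.
  move=> dz; have nj : jump k = false by rewrite /jump dz eqxx.
  have El : ell k.+1 = ell k by rewrite hell nj.
  by split => //; apply: eS.
move=> dn; split.
- rewrite hell hjmp dn /=; case: (leqP (2 * ell k) k) => h.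
    rewrite eE subzn; last by apply: leqW.
    rewrite max_l //.
    rewrite -PoszD; congr Posz; nlia.
  rewrite max_r ?add0r // eE subr_le0 lez_nat; exact: h.
- case: hjp => [hm|[J [hJ lt]]].
    by rewrite hm (r1 hm).
  rewrite hJ /=.
  have -> : Posz J + 1 = Posz (J.+1) by rewrite -[J.+1]addn1 PoszD.
  by rewrite -(r2 J hJ) PoszD addrK.
- case: (leqP (2 * ell k) k) => h.
    have yj : jump k by rewrite hjmp dn h.
    have E1 : e k = Posz (k - 2 * ell k) + 1.
      rewrite eE subzn; last by apply: leqW.
      rewrite -PoszD addn1; congr Posz; nlia.
    have E2 : e k.+1 = - Posz (k - 2 * ell k).
      rewrite eE hell yj.
      have -> : (2 * (k.+1 - ell k) = k.+2 + (k - 2 * ell k))%N by nlia.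
      by rewrite PoszD opprD addrA subrr add0r.
    rewrite E2 E1 ger0_norm; last by rewrite -PoszD.
    by rewrite opprD -addrA addNr addr0.
  have nj : jump k = false by rewrite hjmp dn /= leqNgt h.
  have El : ell k.+1 = ell k by rewrite hell nj.
  rewrite (eS El) ler0_norm ?opprK //.
  by rewrite eE subr_le0 lez_nat.
Qed.

End Proofs.

Unset Implicit Arguments.
Set Strict Implicit.
Theorem mainTheorem10 (D : idomainType) (n : nat) (eps : D) (s : seq D) :
  (1 <= n)%N -> size s = n ->
  (forall j : nat, (j <= n)%N ->
     [/\ (rho eps s j)`_0 != 0,
         (deg (rho eps s j) <= ell eps s j)%N,
         Rp (take j s) (rho eps s j) (ell eps s j),
         isMin (take j s) ('X^(ell eps s j - deg (rho eps s j)) * recip (rho eps s j))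
       & ell eps s j = L (take j s)]) /\
  (forall j : nat, (1 <= j <= n)%N ->
     (delta eps s j = 0 ->
        ell eps s j = ell eps s j.-1 /\ e eps s j = e eps s j.-1 + 1) /\
     (delta eps s j != 0 ->
        [/\ (ell eps s j)%:Z = Num.max (e eps s j.-1) 0 + (ell eps s j.-1)%:Z,
            (ell eps s j)%:Z = jp eps s j + 1 - (ellZ eps s (jp eps s j))%:Z
          & e eps s j = - `|e eps s j.-1| + 1])).
Proof.
move=> _ hs; split.
  by move=> j hj; apply: part1; rewrite hs.
by case=> [|k] //= _; apply: part2.
Qed.
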